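(* In the Mandelbrot–Shepp model with any parameter $\alpha>0$, $$\mathbb{P}_\alpha(\mathcal{V}\neq\emptyset)=\mathbb{P}_\alpha\Big(\bigcap_{n=1}^\infty\big\{\mathcal{V}(\omega[\tfrac1n])\neq\emptyset\big\}\Big).$$
   Context: Mandelbrot–Shepp model: $\mathbb{S}^1=\mathbb{R}/\mathbb{Z}$ represented by $[0,1)$. Under $\mathbb{P}_\alpha$, $\omega=\sum_i\delta_{(x_i,y_i)}$ is a Poisson point process on $\mathbb{S}^1\times(0,\infty)$ with intensity $\alpha\,dx\otimes\frac{dy}{y^2}$. For $(x,y)$ let $\Pi(x,y)=[0,1)$ if $y>1$, $(x,x+y)$ if $y\le1$ and $x+y\le1$, and $(x,1)\cup[0,x+y-1)$ if $y\le1$ and $x+y>1$. For a configuration $\omega$, $\mathcal{C}(\omega)=\bigcup_i\Pi(x_i,y_i)$ and $\mathcal{V}(\omega)=[0,1)\setminus\mathcal{C}(\omega)$; $\mathcal{V}=\mathcal{V}(\omega)$. For $z>0$, the truncated configuration is $\omega[z]=\sum_i\delta_{(x_i,y_i)}\mathbf{1}\{y_i>z\}$. *)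

(* Defs.v *)
From HB Require Import structures.
From mathcomp Require Import all_boot all_order all_algebra.
From mathcomp Require Import all_classical all_reals all_analysis.
Set Implicit Arguments. Unset Strict Implicit. Unset Printing Implicit Defensive.
Import Order.TTheory GRing.Theory Num.Theory.
Local Open Scope classical_set_scope.
Local Open Scope ring_scope.

Section MS.
Context {R : realType}.

(* A point configuration on S^1 x (0,oo): a set of points (x,y), x in [0,1), y > 0. *)
Definition strip : set (R * R) := [set z | 0 <= z.1 < 1 /\ 0 < z.2].

Definition Pi (z : R * R) : set R :=
  let x := z.1 in let y := z.2 in
  if 1 < y then [set t | 0 <= t < 1]
  else if x + y <= 1 then [set t | x < t < x + y]
  else [set t | x < t < 1] `|` [set t | 0 <= t < x + y - 1].

Definition covered (w : set (R * R)) : set R := \bigcup_(z in w) Pi z.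

Definition vacant (w : set (R * R)) : set R :=
  [set t | 0 <= t < 1] `\` covered w.

Definition trunc (w : set (R * R)) (z : R) : set (R * R) :=
  [set p | w p /\ z < p.2].

Definition npoints (w : set (R * R)) (B : set (R * R)) : \bar R :=
  counting (w `&` B).

Definition ms_intensity (alpha : R) (B : set (R * R)) : \bar R :=
  (\int[((@lebesgue_measure R) \x (@lebesgue_measure R))%E]_(z in B)
     (alpha / z.2 ^+ 2)%:E)%E.

Definition pois (m : R) (k : nat) : R := m ^+ k / k`!%:R * expR (- m).

Definition MS_PPP (alpha : R) (d : measure_display) (T : measurableType d)
    (P : probability T R) (omega : T -> set (R * R)) : Prop :=
  [/\ forall t, omega t `<=` strip,
      forall (B : set (R * R)) (n : nat), measurable B ->
        measurable [set t | npoints (omega t) B = (n%:R)%:E] &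
      forall (k : nat) (B : 'I_k -> set (R * R)) (n : 'I_k -> nat),
        (forall i, measurable (B i)) ->
        (forall i, B i `<=` strip) ->
        (forall i j, i != j -> B i `&` B j = set0) ->
        (forall i, (ms_intensity alpha (B i) < +oo)%E) ->
        P [set t | forall i, npoints (omega t) (B i) = ((n i)%:R)%:E] =
        (\prod_(i < k) pois (fine (ms_intensity alpha (B i))) (n i))%:E ].

End MS.

(* Main.v *)
Require Import Defs.
From HB Require Import structures.
From mathcomp Require Import all_boot all_order all_algebra.
From mathcomp Require Import all_classical all_reals all_analysis.
Import Order.TTheory GRing.Theory Num.Theory.
Import numFieldNormedType.Exports.
Local Open Scope classical_set_scope.
Local Open Scope ring_scope.

Section Aux.
Context {R : realType}.

Definition OO (z : R * R) : set R :=
  if 1 < z.2 then setT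
  else if z.1 + z.2 <= 1 then [set t | z.1 < t] `&` [set t | t < z.1 + z.2]
  else [set t | z.1 < t] `|` [set t | t < z.1 + z.2 - 1].

Lemma OO_open z : open (OO z).
Proof.
rewrite /OO; case: ifP => _; first exact: openT.
case: ifP => _; first by apply: openI; [exact: open_gt | exact: open_lt].
by apply: openU; [exact: open_gt | exact: open_lt].
Qed.

Lemma OO_Pi z t : strip z -> 0 <= t < 1 -> (OO z t <-> Pi z t).
Proof.
case: z => x y [/= /andP[x0 x1] y0] /andP[t0 t1]; rewrite /OO /Pi /=.
case: ifP => _; first by split => // _; apply/andP.
case: ifP => h.
  split; first by move=> [/= a b]; rewrite a b.
  by move=> /andP[a b]; split.
split.
  move=> [/= a|/= a]; [left|right] => /=; first by rewrite a t1.
  by rewrite t0 a.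
by move=> [/= /andP[a _]|/= /andP[_ a]]; [left|right].
Qed.

Lemma OO_one z : strip z -> OO z 0 -> OO z 1.
Proof.
case: z => x y [/= /andP[x0 x1] y0]; rewrite /OO /=.
case: ifP => _ //.
case: ifP => _; first by move=> [/= a _]; exfalso; move: a; rewrite ltNge x0.
by move=> _; left.
Qed.

Arguments OO_Pi {z t}.
Arguments OO_one {z}.

Lemma vacant_trunc (w : set (R * R)) (z : R) : vacant w `<=` vacant (trunc w z).
Proof.
move=> t [H1 H2]; split => // -[p [wp _] Pp]; apply: H2; by exists p.
Qed.

Lemma cover_trunc (w : set (R * R)) : w `<=` strip ->
  vacant w = set0 -> exists n : nat, vacant (trunc w (n.+1%:R)^-1) = set0.
Proof.
move=> ws V0.
have cov : forall t, 0 <= t < 1 -> exists2 z, w z & Pi z t.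
  move=> t ht; apply: contrapT => hn.
  have : vacant w t by split => // -[z wz Pz]; apply: hn; exists z.
  by rewrite V0.
have K := @segment_compact R 0 1.
have := (proj1 (compact_near_coveringP _) K) nat \oo
  (fun n x => exists z, [/\ w z, (n.+1%:R)^-1 < z.2 & OO z x]) _.
case.
- move=> x /andP[]; rewrite !bnd_simp => x0 x1.
  pose x' := if x == 1 then 0 else x.
  have hx' : 0 <= x' < 1.
    rewrite /x'; case: eqP => [_|xn]; first by rewrite lexx ltr01.
    by rewrite x0 lt_neqAle x1 andbT; apply/eqP.
  have [z wz Pz] := cov _ hx'.
  have Oz : OO z x.
    have := (proj2 (OO_Pi (ws _ wz) hx') Pz); rewrite /x'.
    by case: eqP => [->|//]; exact: (OO_one (ws _ wz)).
  have y0 : 0 < z.2 by have [] := ws _ wz.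
  have NO : nbhs x (OO z) by apply: open_nbhs_nbhs; split => //; exact: OO_open.
  have Nn := near_infty_natSinv_lt (PosNum y0).
  exists (OO z, [set n : nat | (n.+1%:R)^-1 < z.2]) => //=.
  by case=> a b [/= Ha Hb]; exists z; split.
- move=> N _ HN.
  exists N; apply/seteqP; split => // t [/[dup] ht /andP[t0 t1] nc].
  have [|z [wz lz Oz]] := HN N (leqnn N) t.
    by apply/andP; rewrite !bnd_simp t0 (ltW t1).
  by apply: nc; exists z => //; apply/OO_Pi => //; exact: ws.
Qed.

End Aux.

Theorem mainTheorem14 (R : realType) (alpha : R) (halpha : 0 < alpha)
    (d : measure_display) (T : measurableType d) (P : probability T R)
    (omega : T -> set (R * R)) :
  MS_PPP alpha P omega ->
  P [set t | vacant (omega t) != set0] =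
  P (\bigcap_(n : nat)
       [set t | vacant (trunc (omega t) (n.+1%:R)^-1) != set0]).
Proof.
move=> [hs _ _]; congr (P _); apply/seteqP; split => t /=.
  move=> /set0P [x vx] n _; apply/set0P; exists x; exact: vacant_trunc.
move=> H; apply/negP => /eqP V0.
have [n hn] := cover_trunc _ (hs t) V0.
by have := H n I; rewrite /= hn eqxx.
Qed.
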